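(* Assume $\delta>d$ and $\alpha=\gamma/(\delta-d)$. Then $$\frac{|q(z,w)|/|p(z)|^\alpha}{\big(|w|/|z|^\alpha\big)^d}\longrightarrow 1\quad\text{as } |z|\to\infty \text{ and } |w|/|z|^\alpha\to\infty,$$ and there is $R_0>0$ such that for every $R\ge R_0$ the set $W_R=\{(z,w):|z|>R,\ |w|>R|z|^\alpha\}$ satisfies $f(W_R)\subset W_R$.
   Context: Let $p(z)=z^\delta+O(z^{\delta-1})$ be a monic polynomial of degree $\delta\ge 2$, and let $q(z,w)=b(z)w^d+(\text{terms of lower degree in } w)$ be a polynomial with $d=\deg_w q\ge 2$, where $b$ is a monic polynomial of degree $\gamma\ge 0$. Let $f(z,w)=(p(z),q(z,w))$. For $\delta>d$, define $$\alpha=\max\Big\{\frac{n_j}{\delta-m_j}\;:\; z^{n_j}w^{m_j}\text{ is a monomial appearing in } q \text{ with nonzero coefficient}\Big\}.$$ *)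

(* Defs.v *)
From Stdlib Require Import Reals Lra List.
Open Scope R_scope.

(* Complex numbers as pairs (real part, imaginary part). *)
Definition CC : Type := (R * R)%type.
Definition C0 : CC := (0, 0).
Definition C1 : CC := (1, 0).
Definition Cadd (a b : CC) : CC := (fst a + fst b, snd a + snd b).
Definition Cmul (a b : CC) : CC :=
  (fst a * fst b - snd a * snd b, fst a * snd b + snd a * fst b).
Definition Cnorm (a : CC) : R := sqrt (fst a ^ 2 + snd a ^ 2).

Definition Ceq_dec (a b : CC) : {a = b} + {a <> b}.
Proof. decide equality; apply Req_EM_T. Defined.

(* Univariate polynomial: list of coefficients in ASCENDING order,
   l = [c_0; c_1; ...] represents c_0 + c_1 z + c_2 z^2 + ... *)
Fixpoint peval (l : list CC) (z : CC) : CC :=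
  match l with
  | nil => C0
  | c :: l' => Cadd c (Cmul z (peval l' z))
  end.

Definition monic_deg (l : list CC) (n : nat) : Prop :=
  length l = S n /\ nth n l C0 = C1.

(* Bivariate polynomial q(z,w) = sum_m (nth m q) (z) * w^m :
   q is the list of its coefficients in w (ascending), each a polynomial in z. *)
Definition qeval (q : list (list CC)) (z w : CC) : CC :=
  peval (map (fun c => peval c z) q) w.

Definition qcoef (q : list (list CC)) (n m : nat) : CC := nth n (nth m q nil) C0.

Definition monomials (q : list (list CC)) : list (nat * nat) :=
  flat_map (fun m =>
     flat_map (fun n => if Ceq_dec (qcoef q n m) C0 then nil else (n, m) :: nil)
              (seq 0 (length (nth m q nil))))
    (seq 0 (length q)).

(* alpha = max { n / (delta - m) : z^n w^m a monomial of q }.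
   (Folding Rmax from 0 is harmless: all the ratios are >= 0 and the set is
   nonempty since b(z) w^d is part of q.) *)
Definition alpha (delta : nat) (q : list (list CC)) : R :=
  fold_right Rmax 0
    (map (fun nm => INR (fst nm) / INR (delta - snd nm)) (monomials q)).

Definition inW (Rr a : R) (z w : CC) : Prop :=
  Cnorm z > Rr /\ Cnorm w > Rr * Rpower (Cnorm z) a.

(* Main.v *)
From Stdlib Require Import Reals List Lra Lia.
From Coquelicot Require Import Complex.
Require Import Defs.
Open Scope R_scope.

Lemma Cn_add a b : Cnorm (Cadd a b) <= Cnorm a + Cnorm b.
Proof. exact (Cmod_triangle a b). Qed.
Lemma Cn_mul a b : Cnorm (Cmul a b) = Cnorm a * Cnorm b.
Proof. exact (Cmod_mult a b). Qed.
Lemma Cn_ge0 a : 0 <= Cnorm a.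
Proof. exact (Cmod_ge_0 a). Qed.
Lemma Cn_C0 : Cnorm C0 = 0.
Proof. unfold Cnorm, C0; simpl. replace (0*(0*1)+0*(0*1)) with 0 by ring. apply sqrt_0. Qed.
Lemma Cn_C1 : Cnorm C1 = 1.
Proof. unfold Cnorm, C1; simpl. replace (1*(1*1)+0*(0*1)) with 1 by ring. apply sqrt_1. Qed.
Lemma Cn_sub_ge a b : Cnorm a - Cnorm b <= Cnorm (Cadd a b).
Proof.
  assert (H := Cn_add (Cadd a b) (Cmul (-1,0) b)).
  replace (Cadd (Cadd a b) (Cmul (-1, 0) b)) with a in H.
  2:{ destruct a, b; unfold Cadd, Cmul; simpl; f_equal; ring. }
  rewrite Cn_mul in H.
  replace (Cnorm (-1,0)) with 1 in H. lra.
  unfold Cnorm; simpl. replace ((-1)*((-1)*1)+0*(0*1)) with 1 by ring. now rewrite sqrt_1.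
Qed.

Fixpoint zpow (z : CC) (k : nat) : CC :=
  match k with O => C1 | S k' => Cmul z (zpow z k') end.
Lemma Cn_zpow z k : Cnorm (zpow z k) = Cnorm z ^ k.
Proof. induction k; simpl. apply Cn_C1. rewrite Cn_mul, IHk; ring. Qed.

Lemma peval_app l1 l2 z :
  peval (l1 ++ l2) z = Cadd (peval l1 z) (Cmul (zpow z (length l1)) (peval l2 z)).
Proof.
  induction l1 as [|c l1 IH]; simpl.
  - destruct (peval l2 z); unfold Cadd, Cmul, C0, C1; simpl; f_equal; ring.
  - rewrite IH. destruct c, (peval l1 z), (peval l2 z), (zpow z (length l1)), z.
    unfold Cadd, Cmul; simpl; f_equal; ring.
Qed.

Fixpoint rs (l : list CC) (r : R) (k : nat) : R :=
  match l with nil => 0 | c :: l' => Cnorm c * r ^ k + rs l' r (S k) end.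

Lemma rs_peval l z k : Cnorm (peval l z) * Cnorm z ^ k <= rs l (Cnorm z) k.
Proof.
  revert k; induction l as [|c l IH]; intro k; simpl.
  - rewrite Cn_C0; lra.
  - assert (H1 := Cn_add c (Cmul z (peval l z))).
    rewrite Cn_mul in H1. specialize (IH (S k)). simpl in IH.
    assert (0 <= Cnorm z ^ k) by (apply pow_le, Cn_ge0).
    apply Rle_trans with ((Cnorm c + Cnorm z * Cnorm (peval l z)) * Cnorm z ^ k).
    apply Rmult_le_compat_r; auto. nra.
Qed.

Fixpoint csum (l : list CC) : R :=
  match l with nil => 0 | c :: l' => Cnorm c + csum l' end.
Lemma csum_ge0 l : 0 <= csum l.
Proof. induction l; simpl. lra. pose proof (Cn_ge0 a); lra. Qed.

Lemma rs_bound l r k B : 0 <= B ->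
  (forall i, nth i l C0 <> C0 -> r ^ (i + k) <= B) -> rs l r k <= csum l * B.
Proof.
  revert k; induction l as [|c l IH]; intros k HB H; simpl. lra.
  assert (IH' := IH (S k) HB (fun i Hi => eq_ind _ (fun x => r ^ x <= B) (H (S i) Hi) _ (eq_sym (Nat.add_succ_r i k)))).
  destruct (Ceq_dec c C0) as [->|Hc].
  - rewrite Cn_C0. lra.
  - specialize (H 0%nat Hc). simpl in H. pose proof (Cn_ge0 c). nra.
Qed.

Lemma rs_bound2 l r k B :
  (forall i, Cnorm (nth i l C0) * r ^ (i + k) <= B) -> rs l r k <= INR (length l) * B.
Proof.
  revert k; induction l as [|c l IH]; intros k H; cbn [rs length]. simpl; lra.
  assert (IH' := IH (S k) (fun i => eq_ind _ (fun x => Cnorm (nth i l C0) * r ^ x <= B) (H (S i)) _ (eq_sym (Nat.add_succ_r i k)))).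
  specialize (H 0%nat). simpl in H. change (length (c :: l)) with (S (length l)). rewrite S_INR. lra.
Qed.

Lemma Cadd_comm a b : Cadd a b = Cadd b a.
Proof. destruct a, b; unfold Cadd; simpl; f_equal; ring. Qed.

Lemma split_last (A : Type) (l : list A) n x d :
  length l = S n -> nth n l d = x -> l = firstn n l ++ x :: nil.
Proof.
  intros Hl Hn. rewrite <- (firstn_skipn n l) at 1. f_equal.
  assert (Hs : length (skipn n l) = 1%nat) by (rewrite length_skipn; lia).
  assert (Hx : nth 0 (skipn n l) d = x) by (rewrite nth_skipn, Nat.add_0_r; auto).
  destruct (skipn n l) as [|y [|y' t]]; simpl in *; try lia. now subst.
Qed.

Lemma low_bound l z n : length l = n -> 1 <= Cnorm z ->
  Cnorm (peval l z) * Cnorm z <= csum l * Cnorm z ^ n.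
Proof.
  intros Hl Hz.
  apply Rle_trans with (rs l (Cnorm z) 1).
  { assert (H := rs_peval l z 1). simpl in H. rewrite Rmult_1_r in H. exact H. }
  apply rs_bound. apply pow_le; lra.
  intros i Hi. apply Rle_pow; auto.
  destruct (Nat.lt_ge_cases i (length l)). lia.
  exfalso; apply Hi, nth_overflow; auto.
Qed.

Lemma monic_split l n z : monic_deg l n ->
  peval l z = Cadd (peval (firstn n l) z) (zpow z n).
Proof.
  intros [Hl Hn].
  rewrite (split_last _ l n C1 C0 Hl Hn) at 1.
  rewrite peval_app. rewrite length_firstn. replace (Nat.min n (length l)) with n by lia.
  f_equal. simpl. destruct (zpow z n), z. unfold Cadd, Cmul, C0, C1; simpl; f_equal; ring.
Qed.

Lemma monic_est l n : monic_deg l n -> exists K, 0 <= K /\ forall z, 1 <= Cnorm z ->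
  Rabs (Cnorm (peval l z) - Cnorm z ^ n) * Cnorm z <= K * Cnorm z ^ n.
Proof.
  intros Hm. exists (csum (firstn n l)). split. apply csum_ge0.
  intros z Hz. rewrite (monic_split l n z Hm).
  assert (Hlen : length (firstn n l) = n) by (destruct Hm; rewrite length_firstn; lia).
  assert (H1 := low_bound _ z n Hlen Hz).
  assert (H2 := Cn_add (peval (firstn n l) z) (zpow z n)).
  assert (H3 := Cn_sub_ge (zpow z n) (peval (firstn n l) z)).
  rewrite Cadd_comm in H3. rewrite Cn_zpow in H2, H3.
  apply Rle_trans with (Cnorm (peval (firstn n l) z) * Cnorm z); auto.
  apply Rmult_le_compat_r. lra.
  unfold Rabs; destruct Rcase_abs; lra.
Qed.

Lemma fold_Rmax_in x l : In x l -> x <= fold_right Rmax 0 l.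
Proof.
  induction l; simpl. tauto. intros [->|H]. apply Rmax_l.
  eapply Rle_trans. apply IHl, H. apply Rmax_r.
Qed.
Lemma fold_Rmax_ge0 l : 0 <= fold_right Rmax 0 l.
Proof. induction l; simpl. lra. eapply Rle_trans. apply IHl. apply Rmax_r. Qed.

Lemma mono_in q n m : qcoef q n m <> C0 -> In (n, m) (monomials q).
Proof.
  intro H. unfold monomials. apply in_flat_map. exists m. split.
  - apply in_seq. split. lia. simpl.
    destruct (Nat.lt_ge_cases m (length q)); auto.
    exfalso; apply H. unfold qcoef. rewrite (nth_overflow q nil H0). destruct n; reflexivity.
  - apply in_flat_map. exists n. split.
    + apply in_seq. split. lia. simpl.
      destruct (Nat.lt_ge_cases n (length (nth m q nil))); auto.
      exfalso; apply H. unfold qcoef. rewrite (nth_overflow _ C0 H0). reflexivity.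
    + destruct (Ceq_dec (qcoef q n m) C0). contradiction. left; auto.
Qed.

Lemma coef_exp q delta n m : qcoef q n m <> C0 -> (m < delta)%nat ->
  INR n <= alpha delta q * INR (delta - m).
Proof.
  intros H Hm. assert (Hi := mono_in q n m H).
  assert (Hle : INR n / INR (delta - m) <= alpha delta q).
  { unfold alpha. apply fold_Rmax_in. apply (in_map (fun nm => INR (fst nm) / INR (delta - snd nm)) _ _ Hi). }
  assert (Hp : 0 < INR (delta - m)) by (apply lt_0_INR; lia).
  apply Rmult_le_compat_r with (r := INR (delta - m)) in Hle; [|lra].
  unfold Rdiv in Hle. rewrite Rmult_assoc, Rinv_l, Rmult_1_r in Hle; lra.
Qed.

Lemma Rpower_pos x y : 0 < Rpower x y.
Proof. unfold Rpower. apply exp_pos. Qed.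

Lemma cm_bound q delta m z : (m < delta)%nat -> 1 <= Cnorm z ->
  Cnorm (peval (nth m q nil) z) <=
  csum (nth m q nil) * Rpower (Cnorm z) (alpha delta q * INR (delta - m)).
Proof.
  intros Hm Hz.
  eapply Rle_trans. 2:{ apply rs_bound. left; apply Rpower_pos.
    intros i Hi. rewrite Nat.add_0_r. rewrite <- (Rpower_pow i (Cnorm z)) by lra.
    apply Rle_Rpower; auto. apply coef_exp; auto. }
  assert (H := rs_peval (nth m q nil) z 0). simpl in H. lra.
Qed.

Definition Kq (q : list (list CC)) := fold_right (fun c acc => csum c + acc) 0 q.
Lemma Kq_ge0 q : 0 <= Kq q.
Proof. induction q; simpl. lra. pose proof (csum_ge0 a); lra. Qed.
Lemma csum_Kq q m : csum (nth m q nil) <= Kq q.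
Proof.
  revert m; induction q; intro m; simpl. destruct m; simpl; lra.
  pose proof (csum_ge0 a). pose proof (Kq_ge0 q).
  destruct m. lra. specialize (IHq m). lra.
Qed.

Lemma q_split q b d z w : length q = S d -> nth d q nil = b ->
  qeval q z w = Cadd (peval (map (fun c => peval c z) (firstn d q)) w)
                     (Cmul (zpow w d) (peval b z)).
Proof.
  intros Hl Hb. unfold qeval.
  rewrite (split_last _ q d b nil Hl Hb) at 1.
  rewrite map_app, peval_app, length_map, length_firstn.
  replace (Nat.min d (length q)) with d by lia.
  f_equal. f_equal. simpl. destruct (peval b z). unfold Cadd, Cmul, C0; simpl; f_equal; ring.
Qed.

Lemma E_bound q delta d z w X : length q = S d -> (d < delta)%nat -> 1 <= Cnorm z -> 1 <= X ->
  Cnorm w = X * Rpower (Cnorm z) (alpha delta q) ->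
  Cnorm (peval (map (fun c => peval c z) (firstn d q)) w) <=
  INR d * (Kq q * Rpower (Cnorm z) (alpha delta q) ^ delta * X ^ (d - 1)).
Proof.
  intros Hlq Hd Hz HX Hw. set (t := Rpower (Cnorm z) (alpha delta q)) in *.
  assert (Ht : 0 < t) by apply Rpower_pos.
  assert (HK := Kq_ge0 q).
  assert (HB : 0 <= Kq q * t ^ delta * X ^ (d - 1)).
  { apply Rmult_le_pos. apply Rmult_le_pos; auto. apply pow_le; lra. apply pow_le; lra. }
  eapply Rle_trans.
  { assert (H := rs_peval (map (fun c => peval c z) (firstn d q)) w 0). simpl in H.
    rewrite Rmult_1_r in H. exact H. }
  replace (INR d) with (INR (length (map (fun c => peval c z) (firstn d q)))).
  2:{ rewrite length_map, length_firstn. f_equal. lia. }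
  apply rs_bound2. intro i. rewrite Nat.add_0_r.
  change C0 with ((fun c => peval c z) nil). rewrite map_nth, nth_firstn.
  destruct (Nat.ltb_spec i d).
  - assert (Hc := cm_bound q delta i z ltac:(lia) Hz).
    rewrite <- Rpower_mult, Rpower_pow in Hc by exact Ht. fold t in Hc.
    assert (Hc2 := csum_Kq q i).
    rewrite Hw, Rpow_mult_distr.
    assert (H1 : t ^ (delta - i) * t ^ i = t ^ delta) by (rewrite <- pow_add; f_equal; lia).
    assert (H2 : X ^ i <= X ^ (d - 1)) by (apply Rle_pow; auto; lia).
    assert (H3 : 0 <= t ^ (delta - i)) by (apply pow_le; lra).
    assert (H4 : 0 <= t ^ i) by (apply pow_le; lra).
    assert (H5 : 0 <= X ^ i) by (apply pow_le; lra).
    assert (H6 : 0 <= csum (nth i q nil)) by apply csum_ge0.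
    assert (H7 : Cnorm (peval (nth i q nil) z) <= Kq q * t ^ (delta - i)).
    { eapply Rle_trans. apply Hc. apply Rmult_le_compat_r; auto. }
    apply Rle_trans with (Kq q * t ^ (delta - i) * (X ^ i * t ^ i)).
    apply Rmult_le_compat_r. nra. auto.
    replace (Kq q * t ^ (delta - i) * (X ^ i * t ^ i)) with (Kq q * (t ^ (delta - i) * t ^ i) * X ^ i) by ring.
    rewrite H1. apply Rmult_le_compat_l; auto. apply Rmult_le_pos; auto. apply pow_le; lra.
  - simpl. rewrite Cn_C0. lra.
Qed.

Lemma Rabs_div_pos x y : 0 < y -> Rabs (x / y) = Rabs x / y.
Proof. intro Hy. unfold Rdiv. rewrite Rabs_mult, Rabs_inv, (Rabs_right y) by lra. auto. Qed.

Lemma div_le_div x y c : 0 < y -> x <= c -> x / y <= c / y.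
Proof. intros Hy H. unfold Rdiv. apply Rmult_le_compat_r; auto. left; apply Rinv_0_lt_compat; auto. Qed.

Lemma alg1 Q bb S Td Xd Xd1 X u K2 Kb : 0 < S -> 0 < Td -> 1 <= X -> Xd = X * Xd1 ->
  0 < Xd1 -> 0 < u ->
  Rabs (Q - Xd * Td * bb) <= K2 * S * Td * Xd1 -> Rabs (bb - S) * u <= Kb * S ->
  Rabs (Q / (S * Td * Xd) - 1) <= Kb / u + K2 / X.
Proof.
  intros HS HT HX HXd HX1 Hu H1 H2. subst Xd.
  assert (HD : 0 < S * Td * (X * Xd1)) by (repeat apply Rmult_lt_0_compat; lra).
  replace (Q / (S * Td * (X * Xd1)) - 1) with
    ((Q - X * Xd1 * Td * bb) / (S * Td * (X * Xd1)) + (bb - S) * u / (S * u)) by (field; lra).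
  eapply Rle_trans. apply Rabs_triang.
  rewrite !Rabs_div_pos by (repeat apply Rmult_lt_0_compat; lra).
  rewrite Rabs_mult, (Rabs_right u) by lra.
  rewrite Rplus_comm. apply Rplus_le_compat.
  - eapply Rle_trans. apply div_le_div. apply Rmult_lt_0_compat; lra. exact H2.
    right; field; lra.
  - eapply Rle_trans. apply div_le_div. exact HD. exact H1.
    right; field; lra.
Qed.

Lemma alg2 A B e : e <= 1/2 -> Rabs (A - 1) <= e -> Rabs (B - 1) <= e ->
  Rabs (A / B - 1) <= 4 * e.
Proof.
  intros He HA HB.
  assert (HB' : 1/2 <= B) by (unfold Rabs in HB; destruct Rcase_abs in HB; lra).
  replace (A / B - 1) with ((A - 1 - (B - 1)) / B) by (field; lra).
  rewrite Rabs_div_pos by lra.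
  assert (Rabs (A - 1 - (B - 1)) <= 2 * e).
  { unfold Rminus at 1. eapply Rle_trans. apply Rabs_triang. rewrite Rabs_Ropp. lra. }
  apply Rle_trans with (2 * e / (1/2)).
  unfold Rdiv. apply Rmult_le_compat. apply Rabs_pos. left; apply Rinv_0_lt_compat; lra. lra.
  apply Rinv_le_contravar; lra.
  right; field.
Qed.

Lemma small_div K u e : 0 <= K -> 0 < e -> u > 2 * K / e -> 0 < u -> K / u <= e / 2.
Proof.
  intros HK He Hu Hu0.
  assert (H : 2 * K < e * u).
  { apply Rmult_lt_compat_l with (r := e) in Hu; auto.
    replace (e * (2 * K / e)) with (2 * K) in Hu by (field; lra). lra. }
  unfold Rdiv. apply Rmult_le_reg_r with u. auto.
  rewrite Rmult_assoc, Rinv_l, Rmult_1_r by lra. lra.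
Qed.

Lemma Rpower_cont a : forall e, e > 0 -> exists d0, d0 > 0 /\
  forall x, Rabs (x - 1) < d0 -> Rabs (Rpower x a - 1) < e.
Proof.
  intros e He.
  assert (Hc : continuity_pt (fun x => Rpower x a) 1).
  { apply derivable_continuous_pt. exists (a * Rpower 1 (a - 1)).
    apply derivable_pt_lim_power. lra. }
  destruct (Hc e He) as [d0 [Hd0 H]]. exists d0. split; auto.
  intros x Hx.
  assert (E1 : Rpower 1 a = 1) by (unfold Rpower; rewrite ln_1, Rmult_0_r; apply exp_0).
  destruct (Req_dec x 1) as [->|Hne].
  { rewrite E1, Rminus_diag, Rabs_R0. lra. }
  specialize (H x). simpl in H. unfold R_dist in H. rewrite E1 in H. apply H.
  split; auto. unfold D_x, no_cond. split; auto.
Qed.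

Lemma div_nonneg x y : 0 <= x -> 0 < y -> 0 <= x / y.
Proof. intros. unfold Rdiv. apply Rmult_le_pos; auto. left; apply Rinv_0_lt_compat; auto. Qed.

Lemma part1 (p : list CC) (q : list (list CC)) (b : list CC) (delta d gamma : nat) :
  (2 <= delta)%nat -> monic_deg p delta ->
  (2 <= d)%nat -> length q = Datatypes.S d -> nth d q nil = b -> monic_deg b gamma ->
  (delta > d)%nat ->
  alpha delta q = INR gamma / INR (delta - d) ->
  forall eps, eps > 0 -> exists M, M > 0 /\
     forall z w : CC, Cnorm z > M -> Cnorm w / Rpower (Cnorm z) (alpha delta q) > M ->
       Rabs ((Cnorm (qeval q z w) / Rpower (Cnorm (peval p z)) (alpha delta q))
               / (Cnorm w / Rpower (Cnorm z) (alpha delta q)) ^ d - 1) < eps.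
Proof.
  intros Hdel Hp Hd Hlq Hb Hbm Hdd Ha eps Heps.
  set (a := alpha delta q) in *.
  destruct (monic_est p delta Hp) as [Kp [HKp Hpe]].
  destruct (monic_est b gamma Hbm) as [Kb [HKb Hbe]].
  set (K2 := INR d * Kq q).
  assert (HK2 : 0 <= K2) by (apply Rmult_le_pos; [apply pos_INR | apply Kq_ge0]).
  set (e := Rmin (1/2) (eps/8)).
  assert (He : 0 < e) by (unfold e; apply Rmin_glb_lt; lra).
  assert (He1 : e <= 1/2) by apply Rmin_l.
  assert (He2 : e <= eps/8) by apply Rmin_r.
  destruct (Rpower_cont a e He) as [d0 [Hd0 Hc]].
  assert (T1 := div_nonneg (2*Kb) e ltac:(lra) He).
  assert (T2 := div_nonneg (2*K2) e ltac:(lra) He).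
  assert (T3 := div_nonneg (2*Kp) d0 ltac:(lra) Hd0).
  assert (T4 := div_nonneg (2*Kp) 1 ltac:(lra) ltac:(lra)).
  exists (1 + 2*Kb/e + 2*K2/e + 2*Kp/d0 + 2*Kp/1). split. lra.
  intros z w Hz Hw.
  set (u := Cnorm z) in *. set (t := Rpower u a) in *. set (X := Cnorm w / t) in *.
  assert (Hu1 : 1 <= u) by lra.
  assert (Ht : 0 < t) by apply Rpower_pos.
  assert (HX1 : 1 <= X) by lra.
  assert (Hwt : Cnorm w = X * t) by (unfold X; field; lra).
  assert (Hdpos : 0 < INR (delta - d)) by (apply lt_0_INR; lia).
  assert (Hg : INR gamma = a * INR (delta - d)) by (rewrite Ha; field; lra).
  set (Sv := t ^ (delta - d)). set (Td := t ^ d).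
  assert (HS : 0 < Sv) by (apply pow_lt; auto).
  assert (HTd : 0 < Td) by (apply pow_lt; auto).
  assert (HuS : u ^ gamma = Sv).
  { unfold Sv, t. rewrite <- (Rpower_pow gamma u) by lra. rewrite Hg, <- Rpower_mult.
    apply Rpower_pow, Rpower_pos. }
  assert (Htd : t ^ delta = Sv * Td) by (unfold Sv, Td; rewrite <- pow_add; f_equal; lia).
  assert (Hud : Rpower (u ^ delta) a = t ^ delta).
  { unfold t. rewrite <- (Rpower_pow delta u) by lra. rewrite Rpower_mult.
    rewrite <- (Rpower_pow delta (Rpower u a)) by apply Rpower_pos. rewrite Rpower_mult.
    f_equal; ring. }
  assert (HXd : X ^ d = X * X ^ (d - 1)).
  { replace d with (Datatypes.S (d - 1)) at 1 by lia. simpl. auto. }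
  assert (HXd1 : 0 < X ^ (d - 1)) by (apply pow_lt; lra).
  rewrite (q_split q b d z w Hlq Hb).
  set (E := peval (map (fun c => peval c z) (firstn d q)) w).
  set (bz := peval b z).
  assert (HE := E_bound q delta d z w X Hlq Hdd Hu1 HX1 Hwt). fold E in HE. change (Rpower (Cnorm z) (alpha delta q)) with t in HE.
  assert (HY : Cnorm (Cmul (zpow w d) bz) = X ^ d * Td * Cnorm bz).
  { rewrite Cn_mul, Cn_zpow, Hwt, Rpow_mult_distr. unfold Td. ring. }
  assert (HQ : Rabs (Cnorm (Cadd E (Cmul (zpow w d) bz)) - X ^ d * Td * Cnorm bz)
               <= K2 * Sv * Td * X ^ (d - 1)).
  { rewrite <- HY. assert (H1 := Cn_add E (Cmul (zpow w d) bz)).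
    assert (H2 := Cn_sub_ge (Cmul (zpow w d) bz) E). rewrite Cadd_comm in H2.
    assert (Cnorm E <= K2 * Sv * Td * X ^ (d - 1)).
    { eapply Rle_trans. apply HE. rewrite Htd. unfold K2. right; ring. }
    unfold Rabs; destruct Rcase_abs; lra. }
  assert (Hbz : Rabs (Cnorm bz - Sv) * u <= Kb * Sv) by (rewrite <- HuS; apply Hbe; auto).
  assert (HA := alg1 _ _ Sv Td (X ^ d) (X ^ (d - 1)) X u K2 Kb HS HTd HX1 HXd HXd1 ltac:(lra) HQ Hbz).
  assert (HKbu : Kb / u <= e / 2) by (apply small_div; lra).
  assert (HK2X : K2 / X <= e / 2) by (apply small_div; lra).
  set (P := Cnorm (peval p z)).
  assert (Hud0 : 0 < u ^ delta) by (apply pow_lt; lra).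
  set (rho := P / u ^ delta).
  assert (Hrho : Rabs (rho - 1) <= Kp / u).
  { replace (rho - 1) with ((P - u ^ delta) * u / (u ^ delta * u)) by (unfold rho; field; lra).
    rewrite Rabs_div_pos by (apply Rmult_lt_0_compat; lra).
    rewrite Rabs_mult, (Rabs_right u) by lra.
    eapply Rle_trans. apply div_le_div. apply Rmult_lt_0_compat; lra. apply Hpe; auto.
    change (Cnorm z) with u. right; field; lra. }
  assert (HKpu : Kp / u <= d0 / 2) by (apply small_div; lra).
  assert (HKpu1 : Kp / u <= 1 / 2) by (apply small_div; lra).
  assert (Hrho0 : 0 < rho) by (unfold Rabs in Hrho; destruct Rcase_abs in Hrho; lra).
  assert (HB := Hc rho ltac:(lra)).
  assert (HPa : Rpower P a = Rpower rho a * t ^ delta).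
  { rewrite <- Hud, Rpower_mult_distr by lra. f_equal. unfold rho; field; lra. }
  rewrite HPa, Htd.
  assert (HBp : 0 < Rpower rho a) by apply Rpower_pos.
  replace (Cnorm (Cadd E (Cmul (zpow w d) bz)) / (Rpower rho a * (Sv * Td)) / X ^ d)
    with ((Cnorm (Cadd E (Cmul (zpow w d) bz)) / (Sv * Td * X ^ d)) / Rpower rho a).
  2:{ field. repeat split; try lra. apply pow_nonzero; lra. }
  eapply Rle_lt_trans. apply alg2. exact He1. lra. lra. lra.
Qed.

Theorem lemma4p5 (p : list CC) (q : list (list CC)) (b : list CC)
    (delta d gamma : nat) :
  (2 <= delta)%nat -> monic_deg p delta ->
  (2 <= d)%nat -> length q = S d -> nth d q nil = b -> monic_deg b gamma ->
  (delta > d)%nat ->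
  alpha delta q = INR gamma / INR (delta - d) ->
  let a := alpha delta q in
  (forall eps, eps > 0 -> exists M, M > 0 /\
     forall z w : CC, Cnorm z > M -> Cnorm w / Rpower (Cnorm z) a > M ->
       Rabs ((Cnorm (qeval q z w) / Rpower (Cnorm (peval p z)) a)
               / (Cnorm w / Rpower (Cnorm z) a) ^ d - 1) < eps)
  /\
  (exists R0, R0 > 0 /\ forall Rr, Rr >= R0 -> forall z w : CC,
     inW Rr a z w -> inW Rr a (peval p z) (qeval q z w)).
Proof.
  intros H1 H2 H3 H4 H5 H6 H7 H8 a. split.
  - exact (part1 p q b delta d gamma H1 H2 H3 H4 H5 H6 H7 H8).
  - destruct (part1 p q b delta d gamma H1 H2 H3 H4 H5 H6 H7 H8 (1/2) ltac:(lra)) as [M [HM HMp]].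
    destruct (monic_est p delta H2) as [Kp [HKp Hpe]].
    exists (Rmax M (Kp + 2)). split. eapply Rlt_le_trans. 2: apply Rmax_l. lra.
    intros Rr HRr z w [Hz Hw].
    assert (HRM : Rr >= M) by (assert (H := Rmax_l M (Kp + 2)); lra).
    assert (HRK : Rr >= Kp + 2) by (assert (H := Rmax_r M (Kp + 2)); lra).
    unfold inW. fold a in HMp.
    set (u := Cnorm z) in *. set (t := Rpower u a) in *.
    assert (Ht : 0 < t) by apply Rpower_pos.
    assert (Hu1 : 1 <= u) by lra.
    set (P := Cnorm (peval p z)).
    assert (HPu : P > Rr).
    { assert (Hp := Hpe z Hu1). fold u P in Hp.
      assert (Hud : u * u <= u ^ delta).
      { replace (u * u) with (u ^ 2) by ring. apply Rle_pow; auto. }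
      assert (H0 : u ^ delta * (u - Kp) <= P * u).
      { unfold Rabs in Hp; destruct Rcase_abs in Hp.
        - lra.
        - assert (0 <= (P - u ^ delta) * u) by (apply Rmult_le_pos; lra). lra. }
      assert (H9 : 2 * u * u <= P * u) by nra.
      assert (2 * u <= P) by (apply Rmult_le_reg_r with u; lra).
      lra. }
    split. exact HPu.
    set (X := Cnorm w / t) in *.
    assert (HX : X > Rr).
    { unfold X. apply Rmult_gt_reg_r with t; auto. unfold Rdiv.
      rewrite Rmult_assoc, Rinv_l, Rmult_1_r by lra. lra. }
    assert (HV := HMp z w). fold u t X P in HV.
    specialize (HV ltac:(lra) ltac:(lra)).
    set (Qn := Cnorm (qeval q z w)) in *.
    set (Pa := Rpower P a) in *.
    assert (HPa : 0 < Pa) by apply Rpower_pos.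
    assert (HX2 : 2 <= X) by lra.
    assert (HXd : X * X <= X ^ d).
    { replace (X * X) with (X ^ 2) by ring. apply Rle_pow; auto; lra. }
    assert (HXd0 : 0 < X ^ d) by (apply pow_lt; lra).
    set (V := Qn / Pa / X ^ d) in *.
    assert (HV1 : V > 1/2) by (unfold Rabs in HV; destruct Rcase_abs in HV; lra).
    assert (HQ : Qn = V * Pa * X ^ d) by (unfold V; field; split; lra).
    rewrite HQ.
    assert (V * X ^ d > X) by nra.
    nra.
Qed.
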